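(* Let $n\ge 3$, let $a_0,\ldots,a_{n-1}$ be indeterminates over $\mathbb{Q}$, and let $f=x^n+a_{n-1}x^{n-1}+\cdots+a_0$ with roots $r_1,\ldots,r_n$ in an algebraic closure of $\mathbb{Q}(a_0,\ldots,a_{n-1})$. Let $D_2\in\mathbb{Q}[a_0,\ldots,a_{n-1}]$ be the polynomial obtained by expressing the symmetric polynomial $\prod_{1\le i,j,k\le n,\ i<j,\ j\ne k,\ k\ne i}(2r_k-r_i-r_j)$ in terms of the coefficients via Vieta's formulas $a_{n-i}=(-1)^i s_i$ ($s_i$ the $i$th elementary symmetric polynomial of $r_1,\ldots,r_n$). Then $D_2$ is irreducible over $\mathbb{Q}$. *)

(* Defs.v *)
From mathcomp Require Import all_boot all_algebra.
From mathcomp Require Import mpoly.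
Set Implicit Arguments. Unset Strict Implicit. Unset Printing Implicit Defensive.
Import GRing.Theory.
Local Open Scope ring_scope.

(* Irreducibility of a multivariate polynomial over a field: it is
   non-constant (msize p = 1 + total degree, and msize 0 = 0), and in any
   factorization one of the factors is constant (the units of F[x_1..x_n]
   are exactly the nonzero constants). *)
Definition mpoly_irreducible (n : nat) (F : fieldType) (p : {mpoly F[n]}) : Prop :=
  (1 < msize p)%N /\
  forall q r : {mpoly F[n]}, p = q * r -> (msize q <= 1)%N \/ (msize r <= 1)%N.

(* The generic roots r_1..r_n are the variables 'X_0 .. 'X_(n-1).
   rootprod n = prod_{i<j, k<>i, k<>j} (2 r_k - r_i - r_j). *)
Definition rootprod (n : nat) : {mpoly rat[n]} :=
  \prod_(i : 'I_n) \prod_(j : 'I_n | (i < j)%N)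
     \prod_(k : 'I_n | (k != i) && (k != j))
        ('X_k *+ 2 - 'X_i - 'X_j).

(* Vieta substitution: the coefficient variable a_j (j = 0..n-1) is sent
   to (-1)^(n-j) s_(n-j)(r_1..r_n), i.e. a_(n-i) = (-1)^i s_i. *)
Definition vieta (n : nat) : n.-tuple {mpoly rat[n]} :=
  [tuple ((-1) ^+ (n - j)) *: mesym n rat (n - j) | j < n].

(* Main.v *)
Require Import Defs.
From mathcomp Require Import all_boot all_algebra.
From mathcomp Require Import mpoly.
From mathcomp Require Import fingroup perm.
From mathcomp Require Import ring lra zify.
Set Implicit Arguments. Unset Strict Implicit. Unset Printing Implicit Defensive.
Import GRing.Theory.
Local Open Scope ring_scope.

Lemma comp_assoc n k l (p : {mpoly rat[n]}) (t : n.-tuple {mpoly rat[k]}) (u : k.-tuple {mpoly rat[l]}) :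
  (p \mPo t) \mPo u = p \mPo [tuple (tnth t i) \mPo u | i < n].
Proof.
rewrite [p \mPo t]comp_mpolyE [RHS]comp_mpolyE raddf_sum /=; apply: eq_bigr => m _.
rewrite linearZ /= rmorph_prod; congr (_ *: _); apply: eq_bigr => i _.
by rewrite rmorphXn tnth_mktuple.
Qed.

Lemma compX n k (l : 'I_n) (t : n.-tuple {mpoly rat[k]}) : 'X_l \mPo t = tnth t l.
Proof. by rewrite comp_mpolyXU -tnth_nth. Qed.

Definition Lf n (i j k : 'I_n) : {mpoly rat[n]} := 'X_k *+ 2 - 'X_i - 'X_j.
Definition phi n (i j k : 'I_n) : n.-tuple {mpoly rat[n]} :=
  [tuple if l == i then 'X_k *+ 2 - 'X_j else 'X_l | l < n].

Lemma phiL n (i j k : 'I_n) : k != i -> j != i -> Lf i j k \mPo phi i j k = 0.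
Proof.
move=> ki ji; rewrite /Lf !rmorphB rmorphMn /= !compX !tnth_mktuple eqxx.
rewrite (negbTE ki) (negbTE ji); ring.
Qed.

Definition cong (R : comRingType) (d a b : R) := exists c, a - b = d * c.

Lemma cong_add (R : comRingType) (d a b a' b' : R) : cong d a b -> cong d a' b' -> cong d (a + a') (b + b').
Proof. by move=> [c e] [c' e']; exists (c + c'); rewrite mulrDr -e -e'; ring. Qed.

Lemma cong_mul (R : comRingType) (d a b a' b' : R) : cong d a b -> cong d a' b' -> cong d (a * a') (b * b').
Proof. by move=> [c e] [c' e']; exists (c * a' + b * c'); rewrite mulrDr mulrA -e mulrA (mulrC d) -mulrA -e'; ring. Qed.

Lemma cong_refl (R : comRingType) (d a : R) : cong d a a.
Proof. by exists 0; rewrite subrr mulr0. Qed.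

Lemma cong_exp (R : comRingType) (d a b : R) m : cong d a b -> cong d (a ^+ m) (b ^+ m).
Proof. move=> h; elim: m => [|m IH]; first by rewrite !expr0; apply: cong_refl.
by rewrite !exprS; apply: cong_mul. Qed.

Lemma cong_scale n (d a b : {mpoly rat[n]}) c : cong d a b -> cong d (c *: a) (c *: b).
Proof. by move=> [e h]; exists (c *: e); rewrite -scalerBr h scalerAr. Qed.

Lemma factor_gen n (i j k : 'I_n) (F : {mpoly rat[n]}) :
  cong ('X_i - ('X_k *+ 2 - 'X_j)) F (F \mPo phi i j k).
Proof.
set d := (X in cong X).
rewrite {1}[F]mpolyE comp_mpolyEX.
apply: (big_ind2 (cong d)); [exact: cong_refl | move=> *; exact: cong_add | ].
move=> m _; apply: cong_scale; rewrite comp_mpolyX mpolyXE_id.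
apply: (big_ind2 (cong d)); [exact: cong_refl | move=> *; exact: cong_mul | ].
move=> l _; apply: cong_exp; rewrite tnth_mktuple; case: eqP => [->|_].
  by exists 1; rewrite mulr1.
exact: cong_refl.
Qed.

Lemma factor n (i j k : 'I_n) (F : {mpoly rat[n]}) :
  F \mPo phi i j k = 0 -> exists A, F = Lf i j k * A.
Proof.
move=> h; have [c e] := factor_gen i j k F; exists (- c).
by move: e; rewrite h subr0 => ->; rewrite /Lf; ring.
Qed.

Lemma eval_phiL n (v : 'I_n -> rat) (i j k i' j' k' : 'I_n) :
  meval v (Lf i' j' k' \mPo phi i j k) =
  let w m := if m == i then v k *+ 2 - v j else v m in w k' *+ 2 - w i' - w j'.
Proof.
rewrite comp_mpoly_meval /Lf !mevalB mevalMn !mevalXU /= !tnth_mktuple.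
by rewrite !(fun_if (meval v)) !mevalB mevalMn !mevalXU.
Qed.

Definition T n := ('I_n * ('I_n * 'I_n))%type.
Definition Lt n (t : T n) := Lf t.1 t.2.1 t.2.2.
Definition phit n (t : T n) := phi t.1 t.2.1 t.2.2.
Definition valid n (t : T n) := (t.1 < t.2.1)%N && ((t.2.2 != t.1) && (t.2.2 != t.2.1)).

Lemma nonvan n (t t' : T n) : valid t -> valid t' -> t != t' -> Lt t' \mPo phit t != 0.
Proof.
case: t => i [j k]; case: t' => i' [j' k']; rewrite /valid /Lt /phit /=.
move=> /and3P[ij ki kj] /and3P[ij' ki' kj'] ne.
suff [l] : exists l, meval (fun m => (m == l)%:R) (Lf i' j' k' \mPo phi i j k) != 0.
  by apply: contra => /eqP ->; rewrite meval0.
have nij : i != j by rewrite neq_ltn ij.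
have nij' : i' != j' by rewrite neq_ltn ij'.
case: (eqVneq i i') => [eii|nii'].
  subst i'; case: (eqVneq j j') => [ejj|njj'].
    subst j'; have nkk : k != k'.
      by apply/eqP => e; move: ne; rewrite e eqxx.
    exists k'; rewrite eval_phiL /= !eqxx.
    rewrite (negbTE ki') (negbTE nkk) (eq_sym j k') (negbTE kj') (eq_sym j i) (negbTE nij).
    by [].
  exists j; rewrite eval_phiL /= !eqxx.
  rewrite (negbTE ki') (eq_sym j' i) (negbTE nij') (negbTE kj) (eq_sym j' j) (negbTE njj').
  by case: (k' == j); done.
case: (eqVneq i j') => [eij'|nij'2].
  subst j'. exists j; rewrite eval_phiL /= !eqxx.
  have nij2 : i' != j by rewrite neq_ltn (ltn_trans ij' ij).
  rewrite (negbTE kj') (eq_sym i' i) (negbTE nii') (negbTE kj) (negbTE nij2).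
  by case: (k' == j); done.
case: (eqVneq i k') => [eik'|nik'].
  subst k'. exists k; rewrite eval_phiL /= !eqxx.
  rewrite (eq_sym j k) (negbTE kj) (eq_sym i' i) (negbTE ki') (eq_sym j' i) (negbTE kj').
  case E1: (i' == k); case E2: (j' == k); try done.
exists k'; rewrite eval_phiL /= !eqxx.
rewrite (eq_sym k' i) (negbTE nik') (eq_sym i' i) (negbTE nii') (eq_sym j' i) (negbTE nij'2).
rewrite (eq_sym i' k') (negbTE ki') (eq_sym j' k') (negbTE kj').
by done.
Qed.

Lemma dvd_seq n (s : seq (T n)) (F : {mpoly rat[n]}) : uniq s -> all (@valid n) s ->
  (forall t, t \in s -> F \mPo phit t = 0) -> exists B, F = (\prod_(t <- s) Lt t) * B.
Proof.
elim: s F => [|t s IH] F /=; first by move=> _ _ _; exists F; rewrite big_nil mul1r.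
move=> /andP[tns us] /andP[vt vs] h.
have vt' := vt; case/and3P: vt' => _ ki kj.
have [A eA] : exists A, F = Lt t * A.
  apply: factor; apply: h; exact: mem_head.
have hA : forall t', t' \in s -> A \mPo phit t' = 0.
  move=> t' t's; have := h t'; rewrite inE t's orbT => /(_ isT).
  rewrite eA rmorphM /= => /eqP; rewrite mulf_eq0 => /orP[|/eqP //].
  have vt' : valid t' by move/allP: vs; apply.
  have ne : t' != t by apply: contraNneq tns => <-.
  by rewrite (negbTE (nonvan vt' vt ne)).
have [B eB] := IH A us vs hA.
by exists B; rewrite eA eB big_cons mulrA.
Qed.

Lemma rootprodE n : rootprod n = \prod_(t <- [seq t <- index_enum (T n) | valid t]) Lt t.
Proof.
rewrite big_filter /rootprod.
transitivity (\prod_(i < n) \prod_(p : 'I_n * 'I_n | (i < p.1)%N && ((p.2 != i) && (p.2 != p.1)))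
   ('X_p.2 *+ 2 - 'X_i - 'X_p.1 : {mpoly rat[n]})).
  by apply: eq_bigr => i _; rewrite pair_big_dep.
by rewrite pair_big_dep.
Qed.

Lemma perm3 n (a b c i j k : 'I_n) : a != b -> a != c -> b != c -> j != i -> k != i -> k != j ->
  exists s : 'S_n, [/\ s a = i, s b = j & s c = k].
Proof.
move=> ab ac bc ji ki kj.
pose u := tperm a i; pose j1 := u j; pose v := tperm b j1; pose k2 := v (u k).
pose w := tperm c k2.
have ui : u i = a by rewrite /u tpermR.
have ua : u a = i by rewrite /u tpermL.
have j1a : j1 != a by rewrite /j1 -ui (inj_eq perm_inj).
have va : v a = a by rewrite /v tpermD // eq_sym.
have vb : v b = j1 by rewrite /v tpermL.
have k2a : k2 != a by rewrite /k2 -va -ui !(inj_eq perm_inj).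
have k2b : k2 != b by rewrite /k2 -(tpermK b j1 b) -/v vb /j1 !(inj_eq perm_inj).
have wa : w a = a by rewrite /w tpermD // eq_sym.
have wb : w b = b by rewrite /w tpermD // eq_sym.
have wc : w c = k2 by rewrite /w tpermL.
exists (w * v * u)%g; rewrite !permM wa wb wc va ua vb; split => //.
  by rewrite /j1 /u tpermK.
by rewrite /k2 /v tpermK /u tpermK.
Qed.

Lemma sym_phi n (Q : {mpoly rat[n]}) (s : 'S_n) i j k : Q \is symmetric ->
  Q \mPo phi (s i) (s j) (s k) = (Q \mPo phi i j k) \mPo [tuple 'X_(s l) | l < n].
Proof.
move=> /issymP sQ; rewrite comp_assoc -{1}(sQ s) msym_mPo; congr (Q \mPo _).
apply: eq_from_tnth => l; rewrite !tnth_mktuple (inj_eq perm_inj).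
case: eqP => _; last by rewrite compX tnth_mktuple.
by rewrite rmorphB rmorphMn /= !compX !tnth_mktuple.
Qed.

Lemma Lt_neq0 n (t : T n) : valid t -> Lt t != 0.
Proof.
case: t => i [j k]; rewrite /valid /Lt /= => /and3P[_ ki kj].
apply/negP => /eqP e.
have := congr1 (meval (fun m => (m == k)%:R)) e.
rewrite /Lf meval0 !mevalB mevalMn !mevalXU eqxx (eq_sym i) (negbTE ki) (eq_sym j) (negbTE kj).
by [].
Qed.

Definition vlist n := [seq t <- index_enum (T n) | valid t].

Lemma rootprod_neq0 n : rootprod n != 0.
Proof.
rewrite rootprodE prodf_seq_neq0; apply/allP => t.
by rewrite mem_filter => /andP[vt _]; rewrite Lt_neq0.
Qed.

Lemma half n (a b c : 'I_n) (Q R : {mpoly rat[n]}) : a != b -> a != c -> b != c ->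
  Q \is symmetric -> Q * R = rootprod n -> Q \mPo phi a b c = 0 -> (msize R <= 1)%N.
Proof.
move=> ab ac bc sQ eQR h0.
have allv : forall t, t \in vlist n -> Q \mPo phit t = 0.
  case=> i [j k]; rewrite mem_filter /valid /phit /= => /andP[/and3P[ij ki kj] _].
  have ji : j != i by rewrite eq_sym neq_ltn ij.
  have [s [sa sb sc]] := perm3 ab ac bc ji ki kj.
  by rewrite -sa -sb -sc sym_phi // h0 comp_mpoly0.
have [B eB] := dvd_seq (filter_uniq _ (index_enum_uniq _)) (filter_all _ _) allv.
rewrite -rootprodE in eB.
have nz := rootprod_neq0 n.
have BR : B * R = 1.
  apply: (mulfI nz); rewrite mulr1 mulrA -eB; exact: eQR.
have Bn0 : B != 0 by apply/negP => /eqP B0; move: BR; rewrite B0 mul0r => /eqP; rewrite eq_sym oner_eq0.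
have Rn0 : R != 0 by apply/negP => /eqP R0; move: BR; rewrite R0 mulr0 => /eqP; rewrite eq_sym oner_eq0.
have := msizeM Bn0 Rn0; rewrite BR msize1.
have : (0 < msize B)%N by rewrite lt0n msize_poly_eq0.
move=> h1 h2; move: h1 h2; set mb := msize B; set mr := msize R; lia.
Qed.

Lemma msymXU n (s : 'S_n) (i : 'I_n) : msym s ('X_i : {mpoly rat[n]}) = 'X_(s i).
Proof.
rewrite msymX; congr (mpolyX _ _); apply/mnmP => l; rewrite !mnmE.
by rewrite -(inj_eq (@perm_inj _ s)) permKV.
Qed.

Definition g n (s : 'S_n) (t : T n) : T n :=
  if (s t.1 < s t.2.1)%N then (s t.1, (s t.2.1, s t.2.2)) else (s t.2.1, (s t.1, s t.2.2)).

Lemma msym_Lt n (s : 'S_n) (t : T n) : msym s (Lt t) = Lt (g s t).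
Proof.
rewrite /Lt /Lf /g !msymB msymMn !msymXU; case: ifP => _ //=; ring.
Qed.

Lemma g_valid n (s : 'S_n) (t : T n) : valid t -> valid (g s t) && (g s^-1 (g s t) == t).
Proof.
case: t => i [j k]; rewrite /valid /g /= => /and3P[ij ki kj].
have sij : s i != s j by rewrite (inj_eq perm_inj) neq_ltn ij.
case: (ltnP (s i) (s j)) => h /=.
  by rewrite !(inj_eq perm_inj) ki kj /= !permK ?h ?ij eqxx.
have h' : (s j < s i)%N by rewrite ltn_neqAle h eq_sym sij.
rewrite !(inj_eq perm_inj) ki kj /= !permK.
by rewrite h' ltnNge (ltnW ij) /= eqxx.
Qed.

Lemma g_back n (s : 'S_n) (t : T n) : valid (g s t) -> g s^-1 (g s t) == t -> valid t.
Proof.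
case: t => i [j k]; rewrite /valid /g /=.
case: (ltnP (s i) (s j)) => h /= /and3P[h1 h2 h3]; rewrite !permK.
  move: h2 h3; rewrite !(inj_eq perm_inj) => h2 h3.
  case: (ltnP i j) => hij /=; first by rewrite h2 h3.
  by case/and3P => /eqP e _ _; simpl in e; rewrite e ltnn in h.
move: h2 h3; rewrite !(inj_eq perm_inj) => h2 h3.
case: (ltnP j i) => hij /=.
  by case/and3P => /eqP e _ _; simpl in e; rewrite e ltnn in hij.
move=> _; rewrite h2 h3 ltn_neqAle hij andbT.
by rewrite !andbT; apply: contraTneq h1 => /val_inj ->; rewrite ltnn.
Qed.

Lemma rootprod_sym n : rootprod n \is symmetric.
Proof.
apply/issymP => s; rewrite rootprodE !big_filter rmorph_prod /=.
under eq_bigr do rewrite msym_Lt.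
rewrite [RHS](reindex_onto (g s) (g s^-1)); last first.
  by move=> t vt; have /andP[_ /eqP] := g_valid s^-1 vt; rewrite invgK.
apply: eq_bigl => t; apply/idP/andP => [vt|[]].
  by apply/andP; exact: g_valid.
exact: g_back.
Qed.



Lemma P0 n (hn : (3 <= n)%N) : exists a b c : 'I_n,
  [/\ a != b, a != c, b != c & rootprod n \mPo phi a b c = 0].
Proof.
pose o0 : 'I_n := Ordinal (leq_trans (isT : 1 <= 3)%N hn).
pose o1 : 'I_n := Ordinal (leq_trans (isT : 2 <= 3)%N hn).
pose o2 : 'I_n := Ordinal hn.
exists o0, o1, o2; split => //.
rewrite rootprodE rmorph_prod; apply/eqP; rewrite prodf_seq_eq0; apply/hasP.
exists (o0, (o1, o2)); first by rewrite mem_filter mem_index_enum andbT.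
by rewrite /= /Lt /= phiL.
Qed.

Lemma ML n (hn : (3 <= n)%N) (Q R : {mpoly rat[n]}) : Q \is symmetric -> R \is symmetric ->
  Q * R = rootprod n -> (msize Q <= 1)%N \/ (msize R <= 1)%N.
Proof.
move=> sQ sR eQR.
have [a [b [c [h01 h02 h12 P]]]] := P0 hn.
move: P; rewrite -eQR rmorphM /= => /eqP; rewrite mulf_eq0 => /orP[/eqP h|/eqP h].
  by right; apply: (half h01 h02 h12 sQ eQR h).
by left; apply: (half h01 h02 h12 sR _ h); rewrite mulrC.
Qed.
Definition sg n (j : 'I_n) : rat := (-1) ^+ (n - j).
Definition Vt n : n.-tuple {mpoly rat[n]} := [tuple sg j *: 'X_(rev_ord j) | j < n].
Definition Wt n : n.-tuple {mpoly rat[n]} := [tuple sg (rev_ord j) *: 'X_(rev_ord j) | j < n].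
Definition St n : n.-tuple {mpoly rat[n]} := [tuple mesym n rat i.+1 | i < n].

Lemma vietaE n (D : {mpoly rat[n]}) : D \mPo vieta n = (D \mPo Vt n) \mPo St n.
Proof.
rewrite comp_assoc; congr (D \mPo _); apply: eq_from_tnth => j.
rewrite !tnth_mktuple linearZ /= compX tnth_mktuple /=.
by rewrite subnSK.
Qed.

Lemma VW n (D : {mpoly rat[n]}) : (D \mPo Vt n) \mPo Wt n = D.
Proof.
rewrite comp_assoc -[RHS]comp_mpoly_id; congr (D \mPo _); apply: eq_from_tnth => j.
rewrite !tnth_mktuple linearZ /= compX tnth_mktuple rev_ordK scalerA.
by rewrite /sg -exprMn mulrNN mulr1 expr1n scale1r.
Qed.

Lemma WV n (D : {mpoly rat[n]}) : (D \mPo Wt n) \mPo Vt n = D.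
Proof.
rewrite comp_assoc -[RHS]comp_mpoly_id; congr (D \mPo _); apply: eq_from_tnth => j.
rewrite !tnth_mktuple linearZ /= compX tnth_mktuple rev_ordK scalerA.
by rewrite /sg -exprMn mulrNN mulr1 expr1n scale1r.
Qed.

Lemma vieta_inj n (p q : {mpoly rat[n]}) : p \mPo vieta n = q \mPo vieta n -> p = q.
Proof.
rewrite !vietaE => /msym_fundamental_un e.
by rewrite -(VW p) -(VW q) e.
Qed.

Lemma vieta_sym n (p : {mpoly rat[n]}) : p \mPo vieta n \is symmetric.
Proof.
apply: mcomp_sym => i; rewrite -tnth_nth tnth_mktuple.
by apply: rpredZ; apply: mesym_sym.
Qed.

Theorem proposition2 (n : nat) (hn : (3 <= n)%N) :
  (exists D2 : {mpoly rat[n]}, D2 \mPo vieta n = rootprod n) /\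
  (forall D2 : {mpoly rat[n]}, D2 \mPo vieta n = rootprod n ->
     mpoly_irreducible D2).
Proof.
split.
  have [t [et _]] := sym_fundamental (rootprod_sym n).
  exists (t \mPo Wt n).
  by rewrite vietaE WV.
move=> D eD; split.
  rewrite ltnNge; apply/negP => /msize1_polyC eC.
  set c := D@_0 in eC.
  have e1 : rootprod n = c%:MP by rewrite -eD eC comp_mpolyC.
  have [a [b [d [_ _ _ P]]]] := P0 hn.
  move: P; rewrite e1 comp_mpolyC => c0.
  by move: (rootprod_neq0 n); rewrite e1 c0 eqxx.
move=> q r eqr.
have := ML hn (vieta_sym q) (vieta_sym r).
rewrite -rmorphM /= -eqr eD => /(_ erefl) [] /msize1_polyC e.
  left; set c := _@_0 in e.
  have -> : q = c%:MP by apply: vieta_inj; rewrite e comp_mpolyC.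
  by rewrite msizeC; case: (c != 0).
right; set c := _@_0 in e.
have -> : r = c%:MP by apply: vieta_inj; rewrite e comp_mpolyC.
by rewrite msizeC; case: (c != 0).
Qed.
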